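(* If $(T,R_T)$ is a rooted forest and $(F,R_F)\in \mathcal{L}(T)$, then $\rho(T,R_T)\le \rho(F,R_F)$.
   Context: A rooted graph $(F,R)$ is a graph $F$ with a set $R\subsetneq V(F)$ of roots; a rooted forest is a rooted graph whose graph is a forest. For $S\subseteq V(F)$, $e_S(F)$ is the number of edges of $F$ incident to a vertex of $S$, and $\rho(F,R)=\min_{\emptyset\ne S\subseteq V(F)\setminus R} e_S(F)/|S|$. For rooted graphs $(F,R),(F',R')$, a map $\phi:V(F)\to V(F')$ is a local isomorphism if (a) $\phi$ is surjective and $\phi(R)\subseteq R'$, (b) every edge $e\in E(F)$ has $\phi(e)\in E(F')$, and (c) every two distinct edges $e,f\in E(F)$ with $e\cap f\ne\emptyset$ satisfy $\phi(e)\ne\phi(f)$. $\mathcal{L}(T)$ denotes the set of rooted graphs $(F',R')$ such that there is a local isomorphism from $(T,R_T)$ to $(F',R')$. *)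

(* Defs.v *)
From HB Require Import structures.
From mathcomp Require Import all_boot all_order all_algebra.
Set Implicit Arguments. Unset Strict Implicit. Unset Printing Implicit Defensive.
Import Order.TTheory GRing.Theory Num.Theory.

Definition simple_graph (V : finType) (E : {set {set V}}) : Prop :=
  forall e, e \in E -> #|e| = 2.

Definition rooted_graph (V : finType) (E : {set {set V}}) (R : {set V}) : Prop :=
  simple_graph E /\ R \proper [set: V].

Definition adj (V : finType) (E : {set {set V}}) : rel V :=
  fun x y => (x != y) && ([set x; y] \in E).

Definition forest (V : finType) (E : {set {set V}}) : Prop :=
  forall s : seq V, uniq s -> 2 < size s -> ~~ cycle (adj E) s.

Definition eS (V : finType) (E : {set {set V}}) (S : {set V}) : nat :=
  #|[set e in E | e :&: S != set0]|.

Definition ratio (V : finType) (E : {set {set V}}) (S : {set V}) : rat :=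
  ((eS E S)%:R / (#|S|)%:R)%R.

(* rho(F,R) = min over nonempty S subset of V \ R of e_S/|S|.  The minimum is
   taken as a fold started at the candidate S = V \ R (nonempty as R is proper). *)
Definition rho (V : finType) (E : {set {set V}}) (R : {set V}) : rat :=
  \big[Num.min/ratio E (~: R)]_(S : {set V} | (S != set0) && (S \subset ~: R))
     ratio E S.

Definition local_iso (V V' : finType) (E : {set {set V}}) (R : {set V})
    (E' : {set {set V'}}) (R' : {set V'}) (phi : V -> V') : Prop :=
  [/\ (forall y : V', exists x : V, phi x = y) /\ (phi @: R \subset R'),
      (forall e, e \in E -> phi @: e \in E') &
      (forall e f, e \in E -> f \in E -> e != f -> e :&: f != set0 ->
         phi @: e != phi @: f)].

Definition in_L (V V' : finType) (E : {set {set V}}) (R : {set V})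
    (E' : {set {set V'}}) (R' : {set V'}) : Prop :=
  rooted_graph E' R' /\ exists phi : V -> V', local_iso E R E' R' phi.

(* Main.v *)
Require Import Defs.
From mathcomp Require Import all_boot all_order all_algebra ring.
Import Order.TTheory GRing.Theory Num.Theory.
Local Open Scope ring_scope.

Definition cc (K k : nat) : rat := if (k < K)%N then k%:R^-1 - k.+1%:R^-1 else K%:R^-1.

Lemma cc_ge0 K k : (0 < k)%N -> 0 <= cc K k.
Proof.
move=> hk; rewrite /cc; case: ifP => _; last by rewrite invr_ge0 ler0n.
rewrite subr_ge0 lef_pV2 ?posrE ?ltr0n // ?ler_nat //.
Qed.

Lemma cc_sum K m : (0 < m <= K)%N ->
  \sum_(1 <= k < K.+1) (if (m <= k)%N then cc K k else 0) = m%:R^-1.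
Proof.
case/andP=> hm hmK.
rewrite (big_cat_nat _ (n:=m)) //=; last by apply: leqW.
rewrite big1_seq; last first.
  move=> k /andP[_]; rewrite mem_index_iota => /andP[_ hk]; by rewrite leqNgt hk.
rewrite add0r big_nat_recr //= hmK.
rewrite (@telescope_sumr_eq _ m K (fun k => - k%:R^-1)) //.
  by rewrite /cc ltnn; ring.
move=> k /andP[h1 h2]; rewrite h1 /cc h2; ring.
Qed.

Lemma rho_le (V : finType) (E : {set {set V}}) (R S : {set V}) :
  S != set0 -> S \subset ~: R -> rho E R <= Defs.ratio E S.
Proof.
move=> h1 h2; rewrite /rho (bigD1 S) /=; last by rewrite h1 h2.
by rewrite ge_min lexx.
Qed.

Lemma rho_att (V : finType) (E : {set {set V}}) (R : {set V}) :
  R \proper [set: V] ->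
  exists S, [/\ S != set0, S \subset ~: R & rho E R = Defs.ratio E S].
Proof.
move=> hR; rewrite /rho.
apply: (big_ind (fun x => exists S, [/\ S != set0, S \subset ~: R & x = Defs.ratio E S])).
- exists (~: R); split => //.
  case/properP: hR => _ [x _ hx]; apply/set0Pn; exists x; by rewrite in_setC.
- move=> x y [S [h1 h2 ->]] [S' [h1' h2' ->]]; rewrite minEle.
  by case: ifP => _; [exists S | exists S'].
- by move=> S /andP[h1 h2]; exists S.
Qed.

Lemma main_ineq (V W : finType) (ET : {set {set V}}) (RT : {set V})
    (EF : {set {set W}}) (RF : {set W}) (phi : V -> W) :
  local_iso ET RT EF RF phi ->
  forall S : {set W}, S \subset ~: RF ->
  rho ET RT * #|S|%:R <= (eS EF S)%:R.
Proof.
case=> [[surj hR] hE hinj] S hS.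
set t := rho ET RT. set K := #|V|.
pose n y := #|[set u | phi u == y]|.
have n_gt0 : forall y, (0 < n y)%N.
  move=> y; case: (surj y) => x hx; apply/card_gt0P; exists x; by rewrite inE hx.
have n_leK : forall y, (n y <= K)%N by move=> y; apply: max_card.
pose U := [set u | phi u \in S].
pose Uk k := [set u in U | (n (phi u) <= k)%N].
pose c := cc K.
have step1 : #|S|%:R = \sum_(u in U) (n (phi u))%:R^-1 :> rat.
  rewrite (partition_big phi (fun y => y \in S)); last by move=> u; rewrite inE.
  rewrite -sum1_card natr_sum. apply: eq_bigr => y yS.
  rewrite (eq_bigl (fun u => u \in [set u | phi u == y])); last first.
    move=> u; rewrite !inE; apply/andP/idP => [[_ //]| /eqP hu]; by rewrite hu yS.
  rewrite (eq_bigr (fun _ => (n y)%:R^-1)); last by move=> u; rewrite inE => /eqP ->.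
  by rewrite sumr_const -[RHS]mulr_natl mulfV // pnatr_eq0 -lt0n n_gt0.
have step2 : t * #|S|%:R = \sum_(1 <= k < K.+1) c k * (t * #|Uk k|%:R).
  rewrite step1 big_distrr /=.
  rewrite (eq_bigr (fun u => \sum_(1 <= k < K.+1) (if (n (phi u) <= k)%N then t * c k else 0))); last first.
    move=> u _; rewrite -(cc_sum K (n (phi u))); last by rewrite n_gt0 n_leK.
    rewrite big_distrr; apply: eq_bigr => k _.
    by case: ifP => _ /=; rewrite ?mulr0.
  rewrite exchange_big /=; apply: eq_bigr => k _.
  rewrite -big_mkcondr /=.
  rewrite (eq_bigl (fun u => u \in Uk k)); last by move=> u; rewrite !inE.
  rewrite sumr_const -mulr_natr; ring.
have Uk_sub : forall k, Uk k \subset ~: RT.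
  move=> k; apply/subsetP => u; rewrite !inE => /andP[hu _]; apply/negP => uR.
  have h1 := subsetP hS _ hu; rewrite inE in h1.
  by rewrite (subsetP hR _ (imset_f phi uR)) in h1.
have step3 : forall k, t * #|Uk k|%:R <= (eS ET (Uk k))%:R.
  move=> k; case: (eqVneq (Uk k) set0) => [->|ne]; first by rewrite cards0 mulr0 ler0n.
  rewrite -ler_pdivlMr; last by rewrite ltr0n card_gt0.
  exact: rho_le ne (Uk_sub k).
pose w e := \sum_(1 <= k < K.+1) (if e :&: Uk k != set0 then c k else 0).
have step4 : \sum_(1 <= k < K.+1) c k * (eS ET (Uk k))%:R = \sum_(e in ET) w e.
  rewrite /w exchange_big /=; apply: eq_bigr => k _.
  rewrite -big_mkcondr /=.
  rewrite (eq_bigl (fun e => e \in [set e in ET | e :&: Uk k != set0])); last by move=> e; rewrite inE.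
  by rewrite sumr_const -[RHS]mulr_natr.
have step5 : \sum_(e in ET) w e <= (eS EF S)%:R.
  rewrite (partition_big (fun e : {set V} => phi @: e) (fun f : {set W} => f \in EF) (P := fun e => e \in ET)); last by move=> e /hE.
  rewrite /eS -sum1_card natr_sum.
  rewrite (eq_bigl (fun f => (f \in EF) && (f :&: S != set0))); last by move=> f; rewrite inE.
  rewrite big_mkcondr /=. apply: ler_sum => f fE.
  case: ifP => [fS | /negbFE/eqP fS0].
  - case/set0Pn: fS => y1; rewrite inE => /andP[y1f _].
    case: (arg_minnP n y1f) => y0 y0f hmin.
    have wle : forall e, e \in ET -> phi @: e == f -> w e <= (n y0)%:R^-1.
      move=> e eT /eqP fe. rewrite -(cc_sum K (n y0)); last by rewrite n_gt0 n_leK.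
      rewrite /w; apply: ler_sum_nat => k /andP[hk _].
      case: ifP => [/set0Pn [u] | _]; last by case: ifP => // _; apply: cc_ge0.
      rewrite !inE => /andP[ue /andP[_ hu]].
      have hy : (n y0 <= n (phi u))%N by apply: hmin; rewrite -fe; apply: imset_f.
      by rewrite (leq_trans hy hu).
    have card : (#|[set e in ET | phi @: e == f]| <= n y0)%N.
      have [u0 _] : exists u0 : V, true by case: (surj y0) => x _; exists x.
      pose h (e : {set V}) := odflt u0 [pick u in e | phi u == y0].
      have hpick : forall e, e \in ET -> phi @: e == f -> h e \in e /\ phi (h e) = y0.
        move=> e eT /eqP fe; rewrite /h; case: pickP => [u /andP[ue /eqP pu] | none] //=.
        exfalso; move: y0f; rewrite -fe => /imsetP [u ue pu].
        by have := none u; rewrite ue -pu eqxx.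
      rewrite -(card_in_imset (f:=h)); last first.
        move=> e1 e2; rewrite !inE => /andP[e1T e1f] /andP[e2T e2f] heq.
        case: (eqVneq e1 e2) => // ne.
        have [h1 _] := hpick _ e1T e1f; have [h2 _] := hpick _ e2T e2f.
        have : e1 :&: e2 != set0 by apply/set0Pn; exists (h e1); rewrite inE h1 heq h2.
        move/(hinj _ _ e1T e2T ne).
        by rewrite (eqP e1f) (eqP e2f) eqxx.
      apply: subset_leq_card; apply/subsetP => u /imsetP [e he ->]; move: he; rewrite !inE => /andP[eT ef].
      by have [_ ->] := hpick _ eT ef.
    apply: (@le_trans _ _ (\sum_(e in ET | phi @: e == f) (n y0)%:R^-1)).
      by apply: ler_sum => e /andP[eT ef]; exact: wle.
    rewrite (eq_bigl (fun e => e \in [set e in ET | phi @: e == f])); last by move=> e; rewrite inE.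
    by rewrite sumr_const -[X in X <= _]mulr_natr mulrC ler_pdivrMr ?ltr0n ?n_gt0 // mul1r ler_nat.
  - rewrite big1 // => e /andP[eT /eqP fe]; rewrite /w big1 // => k _.
    case: ifP => // /set0Pn [u]; rewrite !inE => /andP[ue /andP[uS _]].
    have : phi u \in f :&: S by rewrite inE -fe uS (imset_f phi ue).
    by rewrite fS0 inE.
rewrite step2; apply: le_trans step5; rewrite -step4.
apply: ler_sum_nat => k /andP[hk _]; apply: ler_wpM2l; [exact: cc_ge0 | exact: step3].
Qed.

Theorem proposition2p4 (V : finType) (ET : {set {set V}}) (RT : {set V})
    (W : finType) (EF : {set {set W}}) (RF : {set W}) :
  rooted_graph ET RT -> forest ET -> in_L ET RT EF RF ->
  (rho ET RT <= rho EF RF)%R.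
Proof.
move=> _ _ [[_ hRF] [phi hphi]].
case: (@rho_att W EF RF hRF) => S [Sne Ssub ->].
rewrite /Defs.ratio ler_pdivlMr ?ltr0n ?card_gt0 //.
exact: main_ineq hphi S Ssub.
Qed.
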